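(* For rational $\delta>0$ let $e(\delta)$ be the least integer $e$ with $2^{-e}<\delta$, and let $g(m,\delta)=(m-1)e(\delta)+\frac{(m-1)m}{2}$. Define $\bar g(x,k,0)=x+k+1$ and $\bar g(x,k,i+1)=g(\bar g(x,k,i),1/k)$. Then for each $i\in\mathbb{N}$: (i) $\bar g(x,k,i)\le (x+k+i+1)^{2^i}$ whenever $x\ge k>0$; (ii) for every $k\ge1$ and every nonempty finite $X\subseteq\mathbb{N}$, if $|X|>\bar g(\min X,k,i)$ then $X$ is $(\omega,k,i)$-persistent.
   Context: Strings are finite binary strings with $\preceq$ the initial-segment order; $2^i$ also denotes the set of strings of length $i$; a tree is a set of strings closed under initial segments; a leaf of a finite tree is a $\preceq$-maximal element. For finite $X=\{x_0<\dots<x_n\}$, a finite tree $T$ is $X$-quasistrong if $T\cap 2^{x_i}\ne\emptyset$ for all $i\le n$ and for each $i<n$ every $\sigma\in T\cap2^{x_i}$ has exactly two incompatible extensions in $T\cap 2^{x_{i+1}}$. $X$ is $\omega$-large if $|X|>\min X$. Persistence with $\alpha=\omega$: for $k\ge1$ and nonempty finite $X$, $X$ is $(\omega,k,0)$-persistent iff $X$ is $\omega$-large; for $i\ge1$, $X$ is $(\omega,k,i)$-persistent iff $X$ contains an $(\omega,k,i-1)$-persistent subset $Y$ such that for every $X$-quasistrong tree $T$ and every coloring $C:T\cap 2^{\max X}\to k$ there exist $c<k$ and a $Y$-quasistrong finite tree $S\subseteq T$ such that every leaf of $S$ has an extension in $C^{-1}(c)$. *)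

(* Defs.v *)
From HB Require Import structures.
From mathcomp Require Import all_boot all_order all_algebra.
From mathcomp Require Import finmap.
Set Implicit Arguments. Unset Strict Implicit. Unset Printing Implicit Defensive.
Import Order.TTheory GRing.Theory Num.Theory.
Local Open Scope fset_scope.

(* e(1/k): least integer e with 2^{-e} < 1/k.  For k >= 1 this least integer is
   >= 1 (2^{-e} >= 1 >= 1/k for e <= 0), and e = k works, so a search over
   0..k is exhaustive.  Only the instances delta = 1/k are ever used. *)
Definition e_inv (k : nat) : nat :=
  find (fun e : nat => ((2%:Q) ^- e < (k%:Q)^-1)%R) (iota 0 k.+1).

(* g(m, 1/k) = (m-1) e(1/k) + (m-1)m/2  (m >= 1 in all uses; (m-1)m is even) *)
Definition g (m k : nat) : nat := m.-1 * e_inv k + (m.-1 * m) %/ 2.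

Fixpoint gbar (x k i : nat) : nat :=
  match i with
  | 0 => x + k + 1
  | i'.+1 => g (gbar x k i') k
  end.

(* binary strings = seq bool; sigma <= tau (initial segment) = prefix sigma tau *)

Definition incompatible (s t : seq bool) : bool :=
  ~~ prefix s t && ~~ prefix t s.

Definition is_tree (T : {fset (seq bool)}) : Prop :=
  forall s, s \in T -> forall t, prefix t s -> t \in T.

Definition is_leaf (S : {fset (seq bool)}) (s : seq bool) : Prop :=
  s \in S /\ forall t, t \in S -> prefix s t -> t = s.

Definition sortX (X : {fset nat}) : seq nat := sort leq X.
Definition minX (X : {fset nat}) : nat := head 0 (sortX X).
Definition maxX (X : {fset nat}) : nat := last 0 (sortX X).

Definition quasistrong (X : {fset nat}) (T : {fset (seq bool)}) : Prop :=
  is_tree T /\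
  (forall i, i < size (sortX X) ->
     exists s, s \in T /\ size s = nth 0 (sortX X) i) /\
  (forall i, i.+1 < size (sortX X) ->
     forall s, s \in T -> size s = nth 0 (sortX X) i ->
       exists t1 t2,
         [/\ t1 \in T, t2 \in T,
             size t1 = nth 0 (sortX X) i.+1, size t2 = nth 0 (sortX X) i.+1 &
             [/\ prefix s t1, prefix s t2, incompatible t1 t2 &
                 forall t, t \in T -> size t = nth 0 (sortX X) i.+1 ->
                   prefix s t -> t = t1 \/ t = t2]]).

Definition omega_large (X : {fset nat}) : Prop := minX X < #|` X|.

(* (omega,k,i)-persistence; colorings C : T \cap 2^{max X} -> k are represented
   by total maps seq bool -> 'I_k (only values on T \cap 2^{max X} matter). *)
Fixpoint persistent (k i : nat) (X : {fset nat}) : Prop :=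
  match i with
  | 0 => X != fset0 /\ omega_large X
  | i'.+1 =>
      X != fset0 /\
      exists Y : {fset nat}, Y `<=` X /\ persistent k i' Y /\
        forall T : {fset (seq bool)}, quasistrong X T ->
        forall C : seq bool -> 'I_k,
        exists (c : 'I_k) (S : {fset (seq bool)}),
          [/\ S `<=` T, quasistrong Y S &
              forall s, is_leaf S s ->
                exists t, [/\ t \in T, size t = maxX X, prefix s t & C t = c]]
  end.

(* Main.v *)
Require Import Defs.
From HB Require Import structures.
From mathcomp Require Import all_boot all_order all_algebra.
From mathcomp Require Import finmap zify.
Set Implicit Arguments. Unset Strict Implicit. Unset Printing Implicit Defensive.
Import Order.TTheory GRing.Theory Num.Theory.


Lemma e_pred_iff (k e : nat) : 0 < k ->
  (((2%:Q) ^- e < (k%:Q)^-1)%R) = (k < 2 ^ e).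
Proof.
move=> k0.
rewrite ltf_pV2 ?posrE ?exprn_gt0 ?ltr0n // -natrX ltr_nat //.
Qed.

Lemma e_inv_spec k : 0 < k -> [/\ 1 <= e_inv k, e_inv k <= k & k < 2 ^ e_inv k].
Proof.
move=> k0; rewrite /e_inv.
set p := (fun e : nat => _).
have hk : p k by rewrite /p e_pred_iff // ltn_expl.
have hh : has p (iota 0 k.+1).
  apply/hasP; exists k => //; by rewrite mem_iota; lia.
have lt := hh; rewrite has_find size_iota in lt.
have := nth_find 0 hh; rewrite nth_iota // add0n /p e_pred_iff // => H.
split.
- move: H; case: (find _ _) => [|f] //=.
  by rewrite expn0 ltnNge k0.
- by rewrite -ltnS.
- exact: H.
Qed.

Lemma g_mono k a b : a <= b -> g a k <= g b k.
Proof.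
move=> ab; rewrite /g; apply: leq_add.
  by apply: leq_mul => //; rewrite -!subn1 leq_sub2r.
apply: leq_div2r; apply: leq_mul => //; by rewrite -!subn1 leq_sub2r.
Qed.

Lemma g_step k p : g p.+2 k = g p.+1 k + e_inv k + p.+1.
Proof.
rewrite /g /=.
have -> : p.+1 * p.+2 = p.+1 * 2 + p * p.+1 by lia.
rewrite divnMDl //; lia.
Qed.

Fixpoint jf (e M : nat) : nat :=
  match M with 0 => 0 | M'.+1 => jf e M' + e + M'.+1 end.

Lemma jf_g k M : jf (e_inv k) M = g M.+1 k.
Proof.
elim: M => [|M IH] /=; first by rewrite /g /= mul0n div0n.
by rewrite g_step IH.
Qed.

Fixpoint hb (x k i : nat) : nat :=
  match i with 0 => x | i'.+1 => jf (e_inv k) (hb x k i') end.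

Lemma hb_gbar x k i : 0 < k -> hb x k i + 2 <= gbar x k i.
Proof.
move=> k0; have [e1 _ _] := e_inv_spec k0.
elim: i => [|i IH] /=; first lia.
rewrite jf_g; apply: leq_trans (g_mono k IH).
rewrite [hb x k i + 2]addn2 g_step -addnA leq_add2l; exact: (leq_add e1 (ltn0Sn _)).
Qed.

Lemma exp_ge (a n : nat) : 0 < a -> 0 < n -> a <= a ^ n.
Proof. by move=> a0 n0; rewrite -{1}(expn1 a) leq_pexp2l. Qed.

Lemma gsq k A : 0 < k -> 2 * k < A -> g A k <= A * A.
Proof.
move=> k0 kA; have [e1 ek _] := e_inv_spec k0.
rewrite /g.
have h1 := leq_trunc_div (A.-1 * A) 2.
have h2 : A.-1 * e_inv k * 2 <= A.-1 * A.-1.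
  rewrite -mulnA; apply: leq_mul => //; lia.
set q := (A.-1 * A) %/ 2.
have h3 : A.-1 * A <= A * A by apply: leq_mul => //; lia.
have h4 : A.-1 * A.-1 <= A * A by apply: leq_mul; lia.
lia.
Qed.

Lemma part1 i x k : 0 < k -> k <= x -> gbar x k i <= (x + k + i + 1) ^ (2 ^ i).
Proof.
move=> k0 kx.
elim: i => [|i IH] /=; first by rewrite expn1 addn0.
have hA : x + k + i + 1 <= (x + k + i + 1) ^ (2 ^ i).
  by apply: exp_ge; [rewrite addn1 | rewrite expn_gt0].
apply: leq_trans (g_mono k IH) _.
apply: leq_trans (gsq k0 _) _; first lia.
have -> : (x + k + i.+1 + 1) ^ 2 ^ i.+1 = ((x + k + i.+1 + 1) ^ 2 ^ i) * ((x + k + i.+1 + 1) ^ 2 ^ i).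
  by rewrite expnS mulnC expnM expnS expn1.
have h : (x + k + i + 1) ^ 2 ^ i <= (x + k + i.+1 + 1) ^ 2 ^ i.
  by rewrite leq_exp2r ?expn_gt0 //; lia.
exact: leq_mul.
Qed.

Fixpoint Ncnt k (chi : seq bool -> 'I_k) (c : 'I_k) (v : seq bool) (D : nat) : nat :=
  match D with
  | 0 => (chi v == c) : nat
  | D'.+1 => Ncnt chi c (rcons v false) D' + Ncnt chi c (rcons v true) D'
  end.

Lemma Ncnt_le k chi c D : forall v, @Ncnt k chi c v D <= 2 ^ D.
Proof.
elim: D => [|D IH] v /=; first by rewrite expn0 leq_b1.
by rewrite expnS mul2n -addnn leq_add.
Qed.

Lemma Ncnt_sum k chi D : forall v, \sum_(c : 'I_k) @Ncnt k chi c v D = 2 ^ D.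
Proof.
elim: D => [|D IH] v /=.
  rewrite (bigD1 (chi v)) //= eqxx big1 // => c /negbTE.
  by rewrite eq_sym => ->.
by rewrite big_split /= !IH expnS mul2n -addnn.
Qed.

Lemma Ncnt_single k chi c D q t : forall g v,
  t * 2 ^ g < @Ncnt k chi c v (g + D) * q ->
  exists u, size u = g /\ t < Ncnt chi c (v ++ u) D * q.
Proof.
elim=> [|g IH] v /=.
  by rewrite expn0 muln1 add0n => h; exists [::]; rewrite cats0.
rewrite expnS mulnDl => h.
have [h1|h2] : t * 2 ^ g < Ncnt chi c (rcons v false) (g + D) * q \/
               t * 2 ^ g < Ncnt chi c (rcons v true) (g + D) * q by lia.
  by have [u [su hu]] := IH _ h1; exists (false :: u); rewrite -cat_rcons /= su.
by have [u [su hu]] := IH _ h2; exists (true :: u); rewrite -cat_rcons /= su.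
Qed.

Lemma Ncnt_pair k chi c D q t : forall g v,
  2 ^ D * q + 2 ^ g * t < @Ncnt k chi c v (g + D) * q ->
  exists u1 u2, [/\ size u1 = g, size u2 = g, u1 != u2,
    t < Ncnt chi c (v ++ u1) D * q & t < Ncnt chi c (v ++ u2) D * q].
Proof.
elim=> [|g IH] v /=.
  rewrite add0n => h; have hh : Ncnt chi c v D * q <= 2 ^ D * q.
    by rewrite leq_mul2r Ncnt_le orbT.
  lia.
rewrite expnS mulnDl => h.
set a := Ncnt chi c (rcons v false) (g + D) in h *.
set b := Ncnt chi c (rcons v true) (g + D) in h *.
case: (ltnP (2 ^ D * q + 2 ^ g * t) (a * q)) => ha.
  have [u1 [u2 [s1 s2 ne h1 h2]]] := IH _ ha.
  exists (false :: u1), (false :: u2); rewrite -!cat_rcons /= s1 s2; split => //.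
case: (ltnP (2 ^ D * q + 2 ^ g * t) (b * q)) => hb.
  have [u1 [u2 [s1 s2 ne h1 h2]]] := IH _ hb.
  exists (true :: u1), (true :: u2); rewrite -!cat_rcons /= s1 s2; split => //.
have h1 : t * 2 ^ g < a * q by lia.
have h2 : t * 2 ^ g < b * q by lia.
have [u1 [s1 hu1]] := Ncnt_single h1.
have [u2 [s2 hu2]] := Ncnt_single h2.
by exists (false :: u1), (true :: u2); rewrite -!cat_rcons /= s1 s2.
Qed.

Definition strs (g : nat) : seq (seq bool) := [seq val t | t <- enum {: g.-tuple bool}].

Lemma mem_strs g u : (u \in strs g) = (size u == g).
Proof.
apply/mapP/eqP => [[t _ ->]|h]; first by rewrite size_tuple.
by exists (Tuple (introT eqP h)); rewrite ?mem_enum.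
Qed.

Lemma uniq_strs g : uniq (strs g).
Proof. by rewrite map_inj_uniq ?enum_uniq //; apply: val_inj. Qed.

Fixpoint emb_rec (child : seq bool -> nat -> bool -> seq bool) v i (w : seq bool) :=
  match w with [::] => v | b :: w' => emb_rec child (child v i b) i.+1 w' end.

Definition emb child r w := emb_rec child r 0 w.

Lemma emb_rec_rcons child w : forall v i b,
  emb_rec child v i (rcons w b) = child (emb_rec child v i w) (i + size w) b.
Proof.
elim: w => [|x w IH] v i b /=; first by rewrite addn0.
by rewrite IH addnS.
Qed.

Lemma emb_rcons child r w b : emb child r (rcons w b) = child (emb child r w) (size w) b.
Proof. exact: emb_rec_rcons. Qed.

Lemma emb_nil child r : emb child r [::] = r.
Proof. by []. Qed.

Lemma prefix_take_size (s t : seq bool) : prefix s t -> s = take (size s) t.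
Proof. by rewrite prefixE => /eqP. Qed.

Lemma emb_props (n : nat) (L : nat -> nat) (P : nat -> seq bool -> Prop)
  child r :
  P 0 r ->
  (forall a v, a < n -> P a v -> forall b, P a.+1 (child v a b) /\ prefix v (child v a b)) ->
  (forall a v, a <= n -> P a v -> size v = L a) ->
  (forall a v, a < n -> P a v -> child v a false != child v a true) ->
  forall w, size w <= n ->
  [/\ P (size w) (emb child r w),
      forall a, a <= size w -> prefix (emb child r (take a w)) (emb child r w) &
      forall w', size w' = size w -> emb child r w = emb child r w' -> w = w'].
Proof.
move=> H0 HP Hsz Hne.
suff: forall m w, size w = m -> m <= n ->
  [/\ P (size w) (emb child r w),
      forall a, a <= size w -> prefix (emb child r (take a w)) (emb child r w) &
      forall w', size w' = size w -> emb child r w = emb child r w' -> w = w'].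
  by move=> H w hw; apply: (H (size w)).
elim=> [|m IH] w.
  case/lastP: w => [|w b]; last by rewrite size_rcons.
  move=> _ _; split => //.
    by move=> a _; rewrite prefix_refl.
  by case/lastP => [|w b] //; rewrite size_rcons.
case/lastP: w => [|w b] //; rewrite size_rcons => /eqP; rewrite eqSS => /eqP sw hs.
have hw : m <= n by apply: ltnW.
have [P1 P2 P3] := IH w sw hw.
have hs' : size w < n by rewrite sw.
have [Pc Pp] := HP _ _ hs' P1 b.
rewrite emb_rcons; split => //.
- move=> a; rewrite leq_eqVlt => /orP[/eqP ->|ha].
    by rewrite -(size_rcons w b) take_size emb_rcons prefix_refl.
  rewrite -cats1 takel_cat //.
  by apply: prefix_trans (P2 _ ha) Pp.
- move=> w'; case/lastP: w' => [|w' b'] //.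
  rewrite size_rcons => /eqP; rewrite eqSS => /eqP sw'.
  rewrite emb_rcons => E.
  have [R1 R2 R3] := IH w' (etrans sw' sw) hw.
  have hs'' : size w' < n by rewrite sw'.
  have [Rc Rp] := HP _ _ hs'' R1 b'.
  have ex : emb child r w = emb child r w'.
    rewrite (prefix_take_size Pp) (prefix_take_size Rp) E.
    by rewrite (Hsz _ _ (ltnW hs') P1) (Hsz _ _ (ltnW hs'') R1) sw'.
  have ew := P3 _ sw' ex.
  rewrite -ew in E *.
  congr rcons; case: b b' E {Pc Pp Rc Rp} => [] [] // E.
  + by move: (Hne _ _ hs' P1); rewrite E eqxx.
  + by move: (Hne _ _ hs' P1); rewrite E eqxx.
Qed.

Lemma sortX_sorted X : sorted ltn (sortX X).
Proof.
rewrite ltn_sorted_uniq_leq sort_uniq fset_uniq /=.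
exact: (sort_sorted leq_total).
Qed.

Lemma mem_sortX X x : (x \in sortX X) = (x \in X).
Proof. by rewrite /sortX mem_sort. Qed.

Lemma size_sortX X : size (sortX X) = #|` X|.
Proof. by rewrite /sortX size_sort. Qed.

Lemma sortX_seq (s : seq nat) : sorted ltn s -> sortX (seq_fset tt s) = s.
Proof.
move=> ss.
have us : uniq s by rewrite ltn_sorted_uniq_leq in ss; case/andP: ss.
have sl : sorted leq s by apply: sub_sorted ss => x y /ltnW.
rewrite /sortX.
have p : perm_eq (enum_fset (seq_fset tt s)) s.
  by have := seq_fset_perm tt s; rewrite undup_id.
rewrite (perm_sortP leq_total leq_trans anti_leq _ _ p).
exact: (sorted_sort leq_trans sl).
Qed.

Lemma card_seq_fset' (s : seq nat) : uniq s -> #|` seq_fset tt s| = size s.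
Proof. by move=> us; rewrite size_seq_fset undup_id. Qed.

Lemma sorted_sub_idx (xs : seq nat) (f : nat -> nat) M :
  sorted ltn xs -> (forall i, i < M -> f i < f i.+1) -> f M < size xs ->
  sorted ltn [seq nth 0 xs (f i) | i <- iota 0 M.+1].
Proof.
move=> sx hf hM.
have fmono : forall d i, i + d <= M -> f i <= f (i + d).
  elim=> [|d IH] i hi; first by rewrite addn0.
  apply: leq_trans (IH i (ltnW _)) _; first by rewrite -addnS.
  by rewrite addnS ltnW // hf // -addnS.
apply/(sortedP 0) => i; rewrite size_map size_iota => hi.
rewrite (nth_map 0) ?size_iota 1?ltnW // (nth_map 0) ?size_iota //.
rewrite !nth_iota // 1?ltnW // /= !add0n.
have hfi : f i.+1 < size xs.
  apply: leq_ltn_trans hM; have := fmono (M - i.+1) i.+1; rewrite subnKC //; apply; lia.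
apply: (sorted_ltn_nth ltn_trans 0 sx) => //.
- by rewrite inE (ltn_trans _ hfi) // hf.
- exact: hf.
Qed.

Lemma prefix_eq_size (a b c : seq bool) : prefix a c -> prefix b c -> size a = size b -> a = b.
Proof.
by move=> /prefix_take_size ha /prefix_take_size hb e; rewrite ha hb e.
Qed.

Definition prefixes (s : seq bool) := [seq take l s | l <- iota 0 (size s).+1].

Lemma mem_prefixes t s : (t \in prefixes s) = prefix t s.
Proof.
apply/mapP/idP => [[l _ ->]|h]; first exact: prefix_take.
exists (size t); last exact: prefix_take_size.
by rewrite mem_iota /= add0n ltnS size_prefix.
Qed.

Lemma two_in_uniq (T : eqType) (l : seq T) t1 t2 :
  uniq l -> t1 \in l -> t2 \in l -> t1 != t2 -> 1 < size l.
Proof.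
move=> ul h1 h2 ne.
have : size [:: t1; t2] <= size l.
  apply: uniq_leq_size; first by rewrite /= inE ne.
  by move=> x; rewrite !inE => /orP[] /eqP ->.
by [].
Qed.

Lemma nth_bool_mem (T : eqType) (l : seq T) d (b : bool) : 1 < size l -> nth d l b \in l.
Proof. by move=> h; apply: mem_nth; case: b => //; apply: ltnW. Qed.

Lemma nth01_neq (T : eqType) (l : seq T) d : uniq l -> 1 < size l -> nth d l false != nth d l true.
Proof. by move=> ul h; rewrite /= nth_uniq //; apply: ltnW. Qed.

Lemma incompat_neq t1 t2 : incompatible t1 t2 -> t1 != t2.
Proof. by case/andP => h _; apply/eqP => e; rewrite e prefix_refl in h. Qed.

Lemma neq_incompat t1 t2 : size t1 = size t2 -> t1 != t2 -> incompatible t1 t2.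
Proof.
move=> s ne; apply/andP; split; apply/negP => p.
  by move/eqP: ne; apply; apply: (prefix_eq_size p (prefix_refl t2)).
by move/eqP: ne; apply; apply: (prefix_eq_size (prefix_refl t1) p).
Qed.

Lemma jf_mono e a b : a <= b -> jf e a <= jf e b.
Proof.
move=> /subnKC <-; elim: (b - a) => [|d IH]; first by rewrite addn0.
by rewrite addnS /=; apply: leq_trans IH _; rewrite -addnA leq_addr.
Qed.

Definition Yof k X M :=
  seq_fset tt [seq nth 0 (sortX X) (jf (e_inv k) i) | i <- iota 0 M.+1].

Lemma phi_exists (X : {fset nat}) (T : {fset (seq bool)}) n :
  size (sortX X) = n.+1 -> quasistrong X T ->
  exists phi : seq bool -> seq bool, forall w, size w <= n ->
  [/\ phi w \in T /\ size (phi w) = nth 0 (sortX X) (size w),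
      forall a, a <= size w -> prefix (phi (take a w)) (phi w) &
      forall w', size w' = size w -> phi w = phi w' -> w = w'].
Proof.
set xs := sortX X => hn [treeT [levT splitT]].
pose candX s a := [seq t <- enum_fset T | prefix s t && (size t == nth 0 xs a.+1)].
pose childX s a (b : bool) := nth [::] (candX s a) b.
pose rootX := nth [::] [seq t <- enum_fset T | size t == nth 0 xs 0] 0.
pose PX a v := v \in T /\ size v = nth 0 xs a.
have H0 : PX 0 rootX.
  have h0 : 0 < size xs by rewrite hn.
  have [s [sT ss]] := levT 0 h0.
  have : s \in [seq t <- enum_fset T | size t == nth 0 xs 0] by rewrite mem_filter ss eqxx.
  move=> hl.
  have : rootX \in [seq t <- enum_fset T | size t == nth 0 xs 0].
    by apply: mem_nth; case: (filter _ _) hl.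
  by rewrite mem_filter => /andP[/eqP ? ?].
have Hc : forall a v, a < n -> PX a v -> 1 < size (candX v a) /\ uniq (candX v a).
  move=> a v an [vT sv].
  have ha : a.+1 < size xs by rewrite hn.
  have [t1 [t2 [t1T t2T s1 s2 [p1 p2 inc _]]]] := splitT a ha v vT sv.
  have u : uniq (candX v a) by rewrite filter_uniq // fset_uniq.
  split => //; apply: (two_in_uniq u (t1 := t1) (t2 := t2)).
  - by rewrite mem_filter p1 s1 eqxx.
  - by rewrite mem_filter p2 s2 eqxx.
  - exact: incompat_neq.
have HP : forall a v, a < n -> PX a v -> forall b, PX a.+1 (childX v a b) /\ prefix v (childX v a b).
  move=> a v an pv b; have [h1 _] := Hc a v an pv.
  have := nth_bool_mem [::] b h1; rewrite mem_filter => /andP[/andP[p /eqP s] T'].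
  by [].
have Hsz : forall a v, a <= n -> PX a v -> size v = nth 0 xs a by move=> a v _ [].
have Hne : forall a v, a < n -> PX a v -> childX v a false != childX v a true.
  by move=> a v an pv; have [h1 u] := Hc a v an pv; apply: nth01_neq.
exists (emb childX rootX) => w hw.
exact: (emb_props H0 HP Hsz Hne hw).
Qed.

Lemma pigeon k (chi : seq bool -> 'I_k) n : 0 < k ->
  exists c : 'I_k, 2 ^ n <= Ncnt chi c [::] n * 2 ^ e_inv k.
Proof.
move=> k0; have [_ _ ke] := e_inv_spec k0.
case: (boolP [exists c : 'I_k, 2 ^ n <= Ncnt chi c [::] n * 2 ^ e_inv k]).
  by move=> /existsP [c hc]; exists c.
rewrite negb_exists => /forallP H.
have H1 : forall c, Ncnt chi c [::] n * k <= (2 ^ n).-1.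
  move=> c; have := H c; rewrite -ltnNge => h.
  rewrite -ltnS prednK ?expn_gt0 //.
  apply: leq_ltn_trans h; rewrite leq_mul2l ltnW ?orbT //.
have : \sum_(c : 'I_k) (Ncnt chi c [::] n * k) <= \sum_(c : 'I_k) (2 ^ n).-1.
  by apply: leq_sum => c _; exact: H1.
rewrite -big_distrl /= Ncnt_sum sum_nat_const card_ord.
have : 0 < 2 ^ n by rewrite expn_gt0.
move: (2 ^ n) => P P0; rewrite -(prednK P0); move: P.-1 => P'.
rewrite /= mulnC; nia.
Qed.

Lemma arith1 A Q N : 0 < A -> 0 < Q -> Q * 2 * A <= N * Q -> A * (Q * 2) + Q * 2 * A.-1 < N * (Q * 2).
Proof. case: A => [//|A'] _ hQ /= h. nia. Qed.

Lemma psi_exists k (chi : seq bool -> 'I_k) n M : 0 < k -> jf (e_inv k) M <= n ->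
 exists (c : 'I_k) (psi : seq bool -> seq bool), forall w, size w <= M ->
 [/\ size (psi w) = jf (e_inv k) (size w),
     forall a, a <= size w -> prefix (psi (take a w)) (psi w),
     forall w', size w' = size w -> psi w = psi w' -> w = w' &
     size w = M -> exists u, size (psi w ++ u) = n /\ chi (psi w ++ u) = c].
Proof.
move=> k0 jM; have [e1 _ _] := e_inv_spec k0.
set e := e_inv k in e1 jM *.
have [c hc] := pigeon chi n k0.
pose D i := n - jf e i.
pose candY v i := [seq u <- strs (e + i.+1) |
   2 ^ D i.+1 <= Ncnt chi c (v ++ u) (D i.+1) * 2 ^ (e + i.+1)].
pose childY v i (b : bool) := v ++ nth [::] (candY v i) b.
pose PY i v := size v = jf e i /\ 2 ^ D i <= Ncnt chi c v (D i) * 2 ^ (e + i).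
have H0 : PY 0 [::] by rewrite /PY /D subn0 addn0.
have Hc : forall i v, i < M -> PY i v -> 1 < size (candY v i) /\ uniq (candY v i).
  move=> i v iM [sv inv].
  have u : uniq (candY v i) by rewrite filter_uniq // uniq_strs.
  split => //.
  have ji : jf e i.+1 <= n by apply: leq_trans (jf_mono e iM) jM.
  have gD : e + i.+1 + D i.+1 = D i by rewrite /D /=; move: ji => /=; lia.
  set A := 2 ^ D i.+1.
  have hA : 0 < A by rewrite expn_gt0.
  have hq : 2 ^ (e + i.+1) = 2 ^ (e + i) * 2 by rewrite addnS expnS mulnC.
  have hQ : 0 < 2 ^ (e + i) by rewrite expn_gt0.
  have hDi : 2 ^ D i = 2 ^ (e + i) * 2 * A by rewrite -gD expnD hq.
  have := @Ncnt_pair k chi c (D i.+1) (2 ^ (e + i.+1)) A.-1 (e + i.+1) v.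
  rewrite gD; case.
    rewrite hq; rewrite hDi in inv.
    exact: arith1.
  move=> u1 [u2 [s1 s2 ne h1 h2]].
  apply: (two_in_uniq u (t1 := u1) (t2 := u2)) => //.
  - by rewrite mem_filter mem_strs s1 eqxx /= andbT; move: h1; rewrite prednK.
  - by rewrite mem_filter mem_strs s2 eqxx /= andbT; move: h2; rewrite prednK.
have HP : forall i v, i < M -> PY i v -> forall b, PY i.+1 (childY v i b) /\ prefix v (childY v i b).
  move=> i v iM pv b; have [h1 _] := Hc i v iM pv.
  have := nth_bool_mem [::] b h1; rewrite mem_filter mem_strs => /andP[hi /eqP s].
  split; last exact: prefix_prefix.
  split; last exact: hi.
  by rewrite /childY size_cat s (proj1 pv) /= addnA.
have Hsz : forall i v, i <= M -> PY i v -> size v = jf e i by move=> i v _ [].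
have Hne : forall i v, i < M -> PY i v -> childY v i false != childY v i true.
  move=> i v iM pv; have [h1 u] := Hc i v iM pv.
  by rewrite /childY eqseq_cat // negb_and nth01_neq // orbT.
exists c, (emb childY [::]) => w hw.
have [E1 E2 E3] := emb_props H0 HP Hsz Hne hw.
split => //; first by case: E1.
move=> sw; case: E1 => s1 inv; rewrite sw in s1 inv.
have hN : 0 * 2 ^ (D M) < Ncnt chi c (emb childY [::] w) (D M + 0) * 1.
  rewrite mul0n addn0 muln1 lt0n; apply/eqP => N0.
  by move: inv; rewrite N0 mul0n leqn0 expn_eq0.
have [u [su hu]] := Ncnt_single (D := 0) hN.
exists u; split; first by rewrite size_cat s1 su /D subnKC.
by move: hu; rewrite muln1 /= lt0b => /eqP.
Qed.

Lemma core k X M T (C : seq bool -> 'I_k) : 0 < k -> jf (e_inv k) M < #|` X| -> quasistrong X T ->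
 exists (c : 'I_k) (S : {fset (seq bool)}), [/\ (S `<=` T)%fset, quasistrong (Yof k X M) S &
   forall s, is_leaf S s -> exists t, [/\ t \in T, size t = maxX X, prefix s t & C t = c]].
Proof.
move=> k0 hM qT.
have treeT : is_tree T by case: qT.
set xs := sortX X; set e := e_inv k.
have hn : size xs = (size xs).-1.+1 by rewrite prednK // size_sortX; apply: leq_ltn_trans hM.
set n := (size xs).-1 in hn.
have jM : jf e M <= n by rewrite -ltnS -hn size_sortX.
have [phi Hphi] := phi_exists hn qT.
have [c [psi Hpsi]] := psi_exists (fun v => C (phi v)) k0 jM.
pose F w := phi (psi w).
have F1 : forall w, size w <= M -> F w \in T /\ size (F w) = nth 0 xs (jf e (size w)).
  move=> w hw; have [s1 _ _ _] := Hpsi w hw.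
  have hpw : size (psi w) <= n by rewrite s1; exact: leq_trans (jf_mono e hw) jM.
  by have [[a b] _ _] := Hphi _ hpw; rewrite /F -s1.
have F2 : forall w a, size w <= M -> a <= size w -> prefix (F (take a w)) (F w).
  move=> w a hw ha; have [s1 p1 _ _] := Hpsi w hw.
  have hpw : size (psi w) <= n by rewrite s1; exact: leq_trans (jf_mono e hw) jM.
  have [_ q2 _] := Hphi _ hpw.
  have hta : size (take a w) <= M by rewrite size_takel // (leq_trans ha hw).
  have [st _ _ _] := Hpsi (take a w) hta.
  rewrite size_takel // in st.
  have E : psi (take a w) = take (jf e a) (psi w) by rewrite {1}(prefix_take_size (p1 a ha)) st.
  by rewrite /F E; apply: q2; rewrite s1; exact: jf_mono.
have F3 : forall w w', size w <= M -> size w' = size w -> F w = F w' -> w = w'.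
  move=> w w' hw sw E; have [s1 _ p3 _] := Hpsi w hw.
  have hw' : size w' <= M by rewrite sw.
  have [s1' _ _ _] := Hpsi w' hw'.
  have hpw : size (psi w) <= n by rewrite s1; exact: leq_trans (jf_mono e hw) jM.
  have [_ _ q3] := Hphi _ hpw.
  apply: p3 => //; apply: q3 => //; by rewrite s1 s1' sw.
pose S := seq_fset tt (flatten [seq prefixes (F w) | w <- strs M]).
have memS : forall t, t \in S <-> exists w, size w = M /\ prefix t (F w).
  move=> t; rewrite seq_fsetE; split.
    move/flattenP => [l /mapP [w wM ->] tl]; exists w.
    by rewrite -mem_prefixes; move: wM; rewrite mem_strs => /eqP.
  move=> [w [sw p]]; apply/flattenP; exists (prefixes (F w)); last by rewrite mem_prefixes.
  by apply/mapP; exists w; rewrite ?mem_strs ?sw.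
have FinS : forall w, size w <= M -> F w \in S.
  move=> w hw; apply/memS; exists (w ++ nseq (M - size w) false).
  split; first by rewrite size_cat size_nseq subnKC.
  have := F2 (w ++ nseq (M - size w) false) (size w).
  rewrite take_size_cat //; apply; by rewrite size_cat size_nseq ?subnKC ?leq_addr.
set ys := [seq nth 0 xs (jf e i) | i <- iota 0 M.+1].
have sys : sorted ltn ys.
  apply: sorted_sub_idx; first exact: sortX_sorted.
    by move=> i _ /=; lia.
  by rewrite hn ltnS.
have sortY : sortX (Yof k X M) = ys by apply: sortX_seq.
have sizeY : size ys = M.+1 by rewrite size_map size_iota.
have nthY : forall i, i < M.+1 -> nth 0 ys i = nth 0 xs (jf e i).
  by move=> i hi; rewrite (nth_map 0) ?size_iota // nth_iota.
exists c, S; split.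
- apply/fsubsetP => t /memS [w [sw p]].
  have hw : size w <= M by rewrite sw.
  exact: treeT (F w) (proj1 (F1 w hw)) t p.
- rewrite /quasistrong sortY sizeY; split.
    move=> s /memS [w [sw p]] t pt; apply/memS; exists w; split => //.
    exact: prefix_trans pt p.
  split.
    move=> i hi; exists (F (nseq i false)).
    have hw : size (nseq i false) <= M by rewrite size_nseq -ltnS.
    split; first exact: FinS.
    by rewrite (proj2 (F1 _ hw)) size_nseq nthY.
  move=> i hi s sS ss.
  have iM : i < M by rewrite -ltnS.
  have iM' : i <= M by apply: ltnW.
  rewrite nthY // in ss; rewrite nthY //.
  case/memS: sS => w [sw p].
  have hw : size w <= M by rewrite sw.
  set w0 := take i w.
  have sw0 : size w0 = i by rewrite size_takel // sw.
  have es : s = F w0.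
    apply: prefix_eq_size p (F2 w i hw _) _; first by rewrite sw.
    by rewrite ss (proj2 (F1 w0 _)) sw0.
  have hb : forall b, size (rcons w0 b) <= M by move=> b; rewrite size_rcons sw0.
  have tk : forall b, take i (rcons w0 b) = w0 by move=> b; rewrite -cats1 take_size_cat.
  have szb : forall b, size (F (rcons w0 b)) = nth 0 xs (jf e i.+1).
    by move=> b; rewrite (proj2 (F1 _ (hb b))) size_rcons sw0.
  have pb : forall b, prefix s (F (rcons w0 b)).
    move=> b; rewrite es -{1}(tk b); apply: F2 => //; by rewrite size_rcons sw0.
  exists (F (rcons w0 false)), (F (rcons w0 true)); split.
  + exact: FinS.
  + exact: FinS.
  + exact: szb.
  + exact: szb.
  split.
  + exact: pb.
  + exact: pb.
  + apply: neq_incompat; first by rewrite !szb.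
    have szr : size (rcons w0 true) = size (rcons w0 false) by rewrite !size_rcons.
    apply/eqP => E; have := F3 _ _ (hb false) szr E.
    by move=> /(congr1 (last false)); rewrite !last_rcons.
  + move=> t tS st pst.
    case/memS: tS => w2 [sw2 p2].
    have hw2 : size w2 <= M by rewrite sw2.
    have hi2 : i < size w2 by rewrite sw2.
    have et : t = F (take i.+1 w2).
      apply: prefix_eq_size p2 (F2 w2 i.+1 hw2 hi2) _.
      by rewrite st (proj2 (F1 _ _)) ?size_takel // sw2.
    have e2 : s = F (take i w2).
      apply: prefix_eq_size (prefix_trans pst p2) (F2 w2 i hw2 (ltnW hi2)) _.
      by rewrite ss (proj2 (F1 _ _)) ?size_takel // ?sw2 // ltnW.
    have ew : w0 = take i w2.
      apply: F3; first by rewrite sw0.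
        by rewrite size_takel ?sw0 // ltnW.
      by rewrite -es.
    rewrite et (take_nth false hi2) -ew.
    by case: (nth false w2 i); [right | left].
- move=> s [sS maxs].
  case/memS: sS => w [sw p].
  have hw : size w <= M by rewrite sw.
  have es := maxs (F w) (FinS w hw) p.
  have [s1 _ _ hl] := Hpsi w hw.
  have [u [su cu]] := hl sw.
  have hu : size (psi w ++ u) <= n by rewrite su.
  have [[tT st] q2 _] := Hphi _ hu.
  exists (phi (psi w ++ u)); split => //.
  + by rewrite st su /maxX -nth_last -/xs.
  + rewrite -es /F; have := q2 (size (psi w)); rewrite take_size_cat //; apply.
    by rewrite size_cat leq_addr.
Qed.

Lemma persist_hb i : forall k (X : {fset nat}), 0 < k -> X != fset0 ->
  hb (minX X) k i < #|` X| -> persistent k i X.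
Proof.
elim: i => [|i IH] k X k0 X0 /= h; first by split.
split => //.
set M := hb (minX X) k i in h.
set xs := sortX X; set e := e_inv k.
set ys := [seq nth 0 xs (jf e i) | i <- iota 0 M.+1].
have hn : size xs = #|` X| by rewrite size_sortX.
have sys : sorted ltn ys.
  apply: sorted_sub_idx; first exact: sortX_sorted.
    by move=> j _ /=; lia.
  by rewrite hn.
have sortY : sortX (Yof k X M) = ys by apply: sortX_seq.
have sizeY : size ys = M.+1 by rewrite size_map size_iota.
have cardY : #|` Yof k X M| = M.+1 by rewrite -size_sortX sortY.
have Y0 : Yof k X M != fset0.
  by apply/eqP => E; move: cardY; rewrite E cardfs0.
exists (Yof k X M); split.
- apply/fsubsetP => y; rewrite seq_fsetE => /mapP [j]; rewrite mem_iota /= add0n => hj ->.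
  rewrite -mem_sortX; apply: mem_nth; rewrite hn; apply: leq_ltn_trans h; apply: jf_mono; by rewrite -ltnS.
- split.
  apply: IH => //.
  have -> : minX (Yof k X M) = minX X.
    by rewrite /minX sortY /ys /= -nth0.
  by rewrite cardY.
  by move=> T qT C; apply: core.
Qed.

Local Open Scope fset_scope.

Theorem lemma2p7 :
  forall i : nat,
    (forall x k : nat, 0 < k -> k <= x ->
       gbar x k i <= (x + k + i + 1) ^ (2 ^ i)) /\
    (forall (k : nat) (X : {fset nat}), 1 <= k -> X != fset0 ->
       gbar (minX X) k i < #|` X| -> persistent k i X).
Proof.
move=> i; split.
  by move=> x k k0 kx; apply: part1.
move=> k X k0 X0 h; apply: persist_hb => //.
have := hb_gbar (minX X) i k0; lia.
Qed.
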